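(* Let $n>1$ be an integer and let $p>q$ be primes neither of which divides $n$. Then $G(pn)<G(qn)$.
   Context: For a positive integer $n$, $\sigma(n)=\sum_{d\mid n} d$. For integers $n>1$ define $G(n)=\dfrac{\sigma(n)}{n\log\log n}$ (natural logarithms). *)

(* Defs.v *)
From mathcomp Require Import all_boot.
From Stdlib Require Import Reals.

Definition sigma (n : nat) : nat := \sum_(d <- divisors n) d.

Definition G (n : nat) : R :=
  Rdiv (INR (sigma n)) (Rmult (INR n) (ln (ln (INR n)))).

(* Main.v *)
Require Import Defs.
From mathcomp Require Import all_boot.
From Stdlib Require Import Reals Lra Psatz.

Lemma sigma_mulp (n p : nat) : (0 < n)%nat -> prime p -> ~~ (p %| n) ->
  Defs.sigma (p * n)%nat = ((p + 1) * Defs.sigma n)%nat.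
Proof.
move=> n0 pp npn.
have p0 : (0 < p)%nat by exact: prime_gt0.
have pn0 : (0 < p * n)%nat by rewrite muln_gt0 p0.
have Hperm : perm_eq (divisors (p * n)%nat) (divisors n ++ map (muln p) (divisors n)).
  apply: uniq_perm; first exact: divisors_uniq.
    rewrite cat_uniq divisors_uniq map_inj_uniq ?divisors_uniq; last first.
      by move=> a b /eqP; rewrite eqn_pmul2l // => /eqP.
    rewrite andbT /=; apply/hasP => -[x /mapP [d _ ->]].
    rewrite -dvdn_divisors // => H; apply/negP: npn; rewrite negbK.
    exact: dvdn_trans (dvdn_mulr _ _) H.
  move=> d; rewrite mem_cat -!dvdn_divisors //.
  apply/idP/idP.
    move=> H; case pd: (p %| d).
      case/dvdnP: pd => d' Hd; subst d.
      apply/orP; right; apply/mapP; exists d'; last by rewrite mulnC.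
      by rewrite -dvdn_divisors // -(dvdn_pmul2l p0) mulnC.
    apply/orP; left.
    have cp : coprime d p by rewrite coprime_sym prime_coprime // pd.
    by rewrite -(Gauss_dvdl n cp) mulnC.
  case/orP => [H | /mapP [d' Hd' ->]].
    exact: dvdn_mull.
  by rewrite dvdn_pmul2l // dvdn_divisors.
rewrite /Defs.sigma (perm_big _ Hperm) big_cat /= big_map.
by rewrite -big_distrr /= mulnDl mul1n addnC.
Qed.

Lemma sigma_gt0 n : (0 < n)%nat -> (0 < Defs.sigma n)%nat.
Proof.
move=> n0; rewrite /Defs.sigma (big_rem n) ?divisors_id //=.
by rewrite ltn_addr.
Qed.

Local Open Scope R_scope.
Lemma lnln_pos (m : nat) : (4 <= m)%nat -> 0 < ln (ln (INR m)).
Proof.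
move=> H.
have Hm : 4 <= INR m.
  replace 4 with (INR 4) by (simpl; lra). apply: le_INR; exact/leP.
rewrite -ln_1; apply: ln_increasing; first lra.
rewrite -(ln_exp 1); apply: ln_increasing; first exact: exp_pos.
have := exp_le_3; lra.
Qed.

Lemma key P Q N s L1 L2 : 0 < s -> 0 < N -> 2 <= Q -> Q + 1 <= P -> 0 < L2 -> L2 < L1 ->
  (P + 1) * s / (P * N * L1) < (Q + 1) * s / (Q * N * L2).
Proof.
move=> Hs HN HQ HPQ HL2 HL12.
have HL1 : 0 < L1 by lra.
have HP : 0 < P by lra.
have D1 : 0 < P * N * L1 by repeat apply: Rmult_lt_0_compat.
have D2 : 0 < Q * N * L2 by repeat apply: Rmult_lt_0_compat; lra.
apply: (Rmult_lt_reg_r (P * N * L1 * (Q * N * L2))); first exact: Rmult_lt_0_compat.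
have E1 : (P + 1) * s / (P * N * L1) * (P * N * L1 * (Q * N * L2)) = (P+1) * s * (Q * N * L2).
  field; repeat split; apply: Rgt_not_eq; lra.
have E2 : (Q + 1) * s / (Q * N * L2) * (P * N * L1 * (Q * N * L2)) = (Q+1) * s * (P * N * L1).
  field; repeat split; apply: Rgt_not_eq; lra.
rewrite E1 E2.
have A : (P+1) * Q * L2 < (Q+1) * P * L1.
  have H1 : (P+1) * Q < (Q+1) * P by nra.
  have H2 : (P+1) * Q * L2 < (Q+1) * P * L2 by apply: Rmult_lt_compat_r.
  have H3 : (Q+1) * P * L2 < (Q+1) * P * L1.
    apply: Rmult_lt_compat_l; nra.
  lra.
have sN : 0 < s * N by nra.
have := Rmult_lt_compat_l _ _ _ sN A.
move=> H; nra.
Qed.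

Theorem mainTheorem10 (n p q : nat) :
  (1 < n)%nat -> prime p -> prime q -> (q < p)%nat ->
  ~~ (p %| n) -> ~~ (q %| n) ->
  Rlt (G (p * n)) (G (q * n)).
Proof.
move=> n1 pp pq qp npn nqn.
have n0 : (0 < n)%nat by exact: ltnW.
have q2 := prime_gt1 pq.
have p2 := prime_gt1 pp.
rewrite /G !sigma_mulp //.
have s0 := sigma_gt0 n n0.
have Hs : 0 < INR (Defs.sigma n) by apply: lt_0_INR; exact/ltP.
have Hn : 0 < INR n by apply: lt_0_INR; exact/ltP.
have Hq : 2 <= INR q by replace 2 with (INR 2) by (simpl; lra); apply: le_INR; exact/leP.
have Hpq : INR q + 1 <= INR p.
  rewrite -S_INR; apply: le_INR; exact/leP.
have L2 : 0 < ln (ln (INR (q * n)%nat)).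
  apply: lnln_pos. by rewrite (leq_mul q2 n1).
have L12 : ln (ln (INR (q * n)%nat)) < ln (ln (INR (p * n)%nat)).
  have H4 : (4 <= q * n)%nat by rewrite (leq_mul q2 n1).
  have Hqn : 4 <= INR (q * n)%nat.
    replace 4 with (INR 4) by (simpl; lra). apply: le_INR; exact/leP.
  have Hlt : INR (q * n)%nat < INR (p * n)%nat.
    apply: lt_INR; apply/ltP; by rewrite ltn_pmul2r.
  apply: ln_increasing.
    rewrite -ln_1; apply: ln_increasing; lra.
  apply: ln_increasing; lra.
rewrite -!multE !mult_INR !plus_INR /= in L2 L12 *.
by apply: key.
Qed.
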